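(* Let $m,K,R\ge 1$ and let $N$ be an even positive integer. Let $\mathbf{P}\in\mathbb{F}_2^{N\times N}$ satisfy $\mathbf{P}\mathbf{P}^T=\mathbf{I}_N$, let $a,b\in\mathbb{F}_{2^m}$ be nonzero with $a\neq b$, and set $c=\frac{a}{a^2+b^2}$, $d=\frac{b}{a^2+b^2}$. Let $\mathbf{H}\in\mathbb{F}_2^{R\times N}$ and $\mathbf{G}\in\mathbb{F}_{2^m}^{K\times N}$ satisfy $\mathbf{G}\mathbf{H}^T=\mathbf{0}_{K\times R}$. Define $\mathbf{G}_{pub}=\mathbf{G}\,(\mathbf{P}_{c,d})^T$ and $\widetilde{\mathbf{H}}=\mathbf{H}\,(\mathbf{P}_{a,b})^T$. Then every entry of $\widetilde{\mathbf{H}}$ lies in the $\mathbb{F}_2$-linear span $\langle a,b\rangle_{\mathbb{F}_2}$, and $$\mathbf{G}_{pub}\,\widetilde{\mathbf{H}}^T=\mathbf{0}_{K\times R}.$$ In particular, the $\mathbb{F}_{2^m}$-linear code generated by the rows of $\mathbf{G}_{pub}$ is contained in the code $\{\mathbf{x}\in\mathbb{F}_{2^m}^N:\widetilde{\mathbf{H}}\mathbf{x}^T=\mathbf{0}\}$.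
   Context: For a binary matrix $\mathbf{P}=(p_{i,j})$ and two nonzero distinct elements $a,b\in\mathbb{F}_{2^m}$, $\mathbf{P}_{a,b}=(\tilde p_{i,j})$ denotes the matrix of the same size with entries in $\mathbb{F}_{2^m}$ given by $\tilde p_{i,j}=a$ if $p_{i,j}=0$ and $\tilde p_{i,j}=b$ if $p_{i,j}=1$. $\langle x_1,\dots,x_k\rangle_{\mathbb{F}_2}$ denotes the $\mathbb{F}_2$-vector space spanned by $x_1,\dots,x_k$. *)

(* Defs.v *)
From HB Require Import structures.
From mathcomp Require Import all_boot all_order all_algebra all_field.
Set Implicit Arguments. Unset Strict Implicit. Unset Printing Implicit Defensive.
Import GRing.Theory.
Local Open Scope ring_scope.

Definition bin_emb (F : fieldType) (x : 'F_2) : F := (nat_of_ord x)%:R.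

Definition bin_mx (F : fieldType) (m n : nat) (A : 'M['F_2]_(m, n)) : 'M[F]_(m, n) :=
  map_mx (@bin_emb F) A.

Definition subst_mx (F : fieldType) (m n : nat) (P : 'M['F_2]_(m, n)) (a b : F)
  : 'M[F]_(m, n) :=
  \matrix_(i, j) (if P i j == 0 then a else b).

Definition in_F2span2 (F : fieldType) (a b x : F) : Prop :=
  exists u v : 'F_2, x = bin_emb F u * a + bin_emb F v * b.

(* Main.v *)
Require Import Defs.
From HB Require Import structures.
From mathcomp Require Import all_boot all_order all_algebra all_field.
From mathcomp Require Import ring.
Import GRing.Theory.
Local Open Scope ring_scope.

Section B.
Variable F : fieldType.
Hypothesis h2 : 2%N \in [pchar F].

Lemma F2cases (x : 'F_2) : x = 0 \/ x = 1.
Proof. case: x => [[|[|k]] Hk]; [left|right|]; try exact: val_inj. by []. Qed.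

Lemma bin0 : bin_emb F 0 = 0. Proof. by rewrite /bin_emb. Qed.
Lemma bin1 : bin_emb F 1 = 1. Proof. by rewrite /bin_emb. Qed.
Lemma binD x y : bin_emb F (x + y) = bin_emb F x + bin_emb F y.
Proof.
case: (F2cases x) => ->; case: (F2cases y) => ->;
rewrite ?bin0 ?bin1 ?addr0 ?add0r //.
rewrite (addrr_pchar2 h2) /bin_emb //.
Qed.
Lemma binM x y : bin_emb F (x * y) = bin_emb F x * bin_emb F y.
Proof.
case: (F2cases x) => ->; case: (F2cases y) => ->;
rewrite ?bin0 ?bin1 ?mulr0 ?mul0r ?mulr1 ?mul1r //.
Qed.
Lemma binsum I (r : seq I) (P : pred I) (f : I -> 'F_2) :
  bin_emb F (\sum_(i <- r | P i) f i) = \sum_(i <- r | P i) bin_emb F (f i).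
Proof. exact: (big_morph _ binD bin0). Qed.
Lemma bin_idem x : bin_emb F x * bin_emb F x = bin_emb F x.
Proof. by rewrite -binM; case: (F2cases x) => ->. Qed.

Lemma bin_mxM m n p (A : 'M['F_2]_(m,n)) (B : 'M['F_2]_(n,p)) :
  bin_mx F (A *m B) = bin_mx F A *m bin_mx F B.
Proof.
apply/matrixP => i j; rewrite !mxE binsum; apply: eq_bigr => k _.
by rewrite binM !mxE.
Qed.
Lemma bin_mxT m n (A : 'M['F_2]_(m,n)) : bin_mx F A^T = (bin_mx F A)^T.
Proof. by apply/matrixP => i j; rewrite !mxE. Qed.
Lemma bin_mx1 n : bin_mx F (1%:M : 'M['F_2]_n) = 1%:M.
Proof. apply/matrixP => i j; rewrite !mxE; case: (i == j); rewrite ?bin0 ?bin1 //. Qed.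

Lemma subst_dec n (P : 'M['F_2]_n) a b i j :
  subst_mx P a b i j = a + (a + b) * bin_mx F P i j.
Proof.
rewrite !mxE; case: (F2cases (P i j)) => ->; rewrite ?bin0 ?bin1 /=.
  by rewrite mulr0 addr0.
by rewrite mulr1 addrA (addrr_pchar2 h2) add0r.
Qed.

Lemma key n (P : 'M['F_2]_n) (hn : ~~ odd n) (hP : P *m P^T = 1%:M) (a b : F) (hab : a != b) :
  let c := a / (a ^+ 2 + b ^+ 2) in
  let d := b / (a ^+ 2 + b ^+ 2) in
  (subst_mx P c d)^T *m subst_mx P a b = 1%:M.
Proof.
move=> c d.
set Q := bin_mx F P.
have hQ : Q^T *m Q = 1%:M.
  by rewrite /Q -bin_mxT -bin_mxM (mulmx1C hP) bin_mx1.
have col : forall j, \sum_k Q k j = 1.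
  move=> j; transitivity ((Q^T *m Q) j j); last by rewrite hQ mxE eqxx.
  by rewrite mxE; apply: eq_bigr => k _; rewrite /Q /bin_mx !mxE bin_idem.
have hN : (n%:R : F) = 0.
  by rewrite -[n]odd_double_half (negbTE hn) add0n -muln2 natrM (pcharf0 h2) mulr0.
have s2 : a ^+ 2 + b ^+ 2 = (a + b) ^+ 2.
  by rewrite sqrrD -mulr_natr (pcharf0 h2) mulr0 addr0.
have ab0 : a + b != 0.
  apply: contra hab; rewrite addr_eq0 => /eqP ->.
  by rewrite (oppr_pchar2 h2).
set s := a ^+ 2 + b ^+ 2.
have sn0 : s != 0 by rewrite /s s2 expf_neq0.
apply/matrixP => i j.
rewrite mxE.
set e := c + d; set f := a + b.
rewrite (eq_bigr (fun k => c * a + (c * f) * Q k j + (e * a) * Q k i + (e * f) * (Q k i * Q k j))); last first.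
  move=> k _; rewrite {1}mxE !subst_dec -/Q /e /f. move: (Q k i) (Q k j) => x y; clearbody c d; ring.
rewrite !big_split /= -!mulr_sumr sumr_const card_ord !col.
have -> : \sum_(k < n) Q k i * Q k j = (1%:M : 'M[F]_n) i j.
  by rewrite -hQ mxE; apply: eq_bigr => k _; rewrite !mxE.
rewrite -mulr_natr hN !mulr0 add0r !mulr1.
have -> : c * f + e * a = (a * a / s + a * b / s) * 2%:R.
  by rewrite /e /f /c /d; ring.
rewrite (pcharf0 h2) mulr0 add0r.
have -> : e * f = (a + b) ^+ 2 / s by rewrite /e /f /c /d; ring.
by rewrite -s2 -/s divff // mul1r.
Qed.
Lemma span_entry r n (H : 'M['F_2]_(r, n)) (P : 'M['F_2]_n) (a b : F) i j :
  in_F2span2 a b ((bin_mx F H *m (subst_mx P a b)^T) i j).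
Proof.
  exists (\sum_(k | P j k == 0) H i k), (\sum_(k | P j k != 0) H i k).
  rewrite !binsum mxE (bigID (fun k => P j k == 0)) /= !mulr_suml.
  congr (_ + _); apply: eq_bigr => k hk; rewrite !mxE.
    by rewrite hk.
  by rewrite (negbTE hk).
Qed.
End B.

Theorem mainTheorem2 (m K R N : nat) (F : finFieldType)
  (hm : (1 <= m)%N) (hK : (1 <= K)%N) (hR : (1 <= R)%N)
  (hN : (0 < N)%N) (hNeven : ~~ odd N)
  (hF : #|F| = (2 ^ m)%N)
  (P : 'M['F_2]_N) (hP : P *m P^T = 1%:M)
  (a b : F) (ha : a != 0) (hb : b != 0) (hab : a != b)
  (H : 'M['F_2]_(R, N)) (G : 'M[F]_(K, N))
  (hGH : G *m (bin_mx F H)^T = 0) :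
  let c := a / (a ^+ 2 + b ^+ 2) in
  let d := b / (a ^+ 2 + b ^+ 2) in
  let Gpub := G *m (subst_mx P c d)^T in
  let Ht := bin_mx F H *m (subst_mx P a b)^T in
  (forall i j, in_F2span2 a b (Ht i j)) /\
  Gpub *m Ht^T = 0 /\
  (forall x : 'rV[F]_N, (x <= Gpub)%MS -> Ht *m x^T = 0).
Proof.
move=> c d Gpub Ht.
have h2 : 2%N \in [pchar F] := card_finPcharP hF (isT : prime 2).
have KEY := @key F h2 N P hNeven hP a b hab.
have part2 : Gpub *m Ht^T = 0.
  by rewrite /Gpub /Ht trmx_mul trmxK mulmxA -(mulmxA G) KEY mulmx1 hGH.
split; last split => //.
  by move=> i j; apply: span_entry.
move=> x /submxP [w ->].
have E : Ht *m Gpub^T = 0 by rewrite -[Ht]trmxK -trmx_mul part2 trmx0.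
by rewrite trmx_mul mulmxA E mul0mx.
Qed.
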